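(* Let $n\ge 4$, $x_1,\dots,x_{n-1}>0$, $\gamma,\delta>0$ with $\gamma\ne1$, $\delta\ne1$, and set $x_0=1$. Let $\mathbf{R}=[r_{ij}]\in\mathbb{R}^{n\times n}$ be given by $r_{ij}=x_{j-1}/x_{i-1}$ for all $i,j$, except $r_{12}=\delta x_1$, $r_{21}=1/(\delta x_1)$, $r_{34}=\gamma x_3/x_2$, $r_{43}=x_2/(\gamma x_3)$. Then the characteristic polynomial of $\mathbf{R}$ is $$p_{\mathbf{R}}(\lambda)=\det(\mathbf{R}-\lambda\mathbf{I})=(-1)^n\lambda^{n-5}\left(\lambda^5-n\lambda^4-(n-2)\left(\gamma+\delta+\frac1\gamma+\frac1\delta-4\right)\lambda^2-c\lambda-(n-4)c\right),\quad c=\frac{(\gamma-1)^2(\delta-1)^2}{\gamma\delta}.$$ In particular, for $n=4$ (where $\mathbf{R}$ is the $4\times4$ matrix $\mathbf{Q}$ with these entries), $$p_{\mathbf{Q}}(\lambda)=\lambda^4-4\lambda^3-2\left(\gamma+\delta+\frac1\gamma+\frac1\delta-4\right)\lambda-\frac{(\gamma-1)^2(\delta-1)^2}{\gamma\delta}.$$ *)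

(* Defs.v *)
From HB Require Import structures.
From mathcomp Require Import all_boot all_order all_algebra.
Set Implicit Arguments. Unset Strict Implicit. Unset Printing Implicit Defensive.
Import Order.TTheory GRing.Theory Num.Theory.
Local Open Scope ring_scope.

(* The matrix R of the paper, 0-based indices: paper's r_{ij} (1-based) is
   entry (i-1, j-1) here.  Generic entry x_j / x_i (0-based), with the four
   exceptional entries (1,2),(2,1),(3,4),(4,3) (1-based). x 0 is expected = 1. *)
Definition Rmat (R : fieldType) (n : nat) (x : nat -> R) (gam del : R) : 'M[R]_n :=
  \matrix_(i < n, j < n)
    if ((i : nat) == 0%N) && ((j : nat) == 1%N) then del * x 1%N
    else if ((i : nat) == 1%N) && ((j : nat) == 0%N) then (del * x 1%N)^-1
    else if ((i : nat) == 2%N) && ((j : nat) == 3%N) then gam * x 3%N / x 2%N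
    else if ((i : nat) == 3%N) && ((j : nat) == 2%N) then x 2%N / (gam * x 3%N)
    else x (j : nat) / x (i : nat).

Definition charpoly_paper (R : comNzRingType) (n : nat) (M : 'M[R]_n) : {poly R} :=
  \det (map_mx polyC M - 'X%:M).

(* Main.v *)
Require Import Defs.
From HB Require Import structures.
From mathcomp Require Import all_boot all_order all_algebra.
From mathcomp Require Import ring lra zify.
Import Order.TTheory GRing.Theory Num.Theory.
Local Open Scope ring_scope.

Lemma det_scalar_rank1 (T : comNzRingType) n (a : T) (w : 'cV[T]_n) (v : 'rV[T]_n) :
  a * \det (a%:M + w *m v) = (a + (v *m w) 0 0) * a ^+ n.
Proof.
pose X : 'M[T]_(1 + n) := block_mx 1%:M (- v) w a%:M.
pose L : 'M[T]_(1 + n) := block_mx 1%:M 0 (- w) 1%:M.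
pose Rt : 'M[T]_(1 + n) := block_mx a%:M 0 (- w) 1%:M.
have h1 : L *m X = block_mx 1%:M (- v) 0 (a%:M + w *m v).
  rewrite /L /X mulmx_block ?mul1mx ?mul0mx ?addr0 ?add0r ?mulmx1.
  by rewrite ?mulNmx ?mulmxN ?opprK ?mul1mx ?addNr ?[_ + w *m v]addrC.
have h2 : X *m Rt = block_mx (a%:M + v *m w) (- v) 0 a%:M.
  rewrite /Rt /X mulmx_block ?mul1mx ?mulmx0 ?add0r ?addr0 ?mulmx1 mul_mx_scalar mul_scalar_mx.
  by rewrite ?mulNmx ?mulmxN ?opprK ?scalerN ?subrr.
have := congr1 determinant h1; rewrite det_mulmx det_lblock det_ublock !det1 !mul1r => hX.
have := congr1 determinant h2; rewrite det_mulmx det_lblock det_ublock det1 mulr1 hX.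
rewrite !det_mx11 det_scalar mulrC !mxE eqxx mulr1n => ->.
by [].
Qed.

Lemma det_rank1 (T : idomainType) n (B : 'M[T]_n) (w u : 'cV[T]_n) (v : 'rV[T]_n) a :
  a != 0 -> B *m w = a *: u -> a * \det (B + u *m v) = \det B * (a + (v *m w) 0 0).
Proof.
move=> a0 hw.
have e : a *: (B + u *m v) = B *m (a%:M + w *m v).
  by rewrite mulmxDr mulmxA hw -scalemxAl mul_mx_scalar scalerDr.
have := congr1 (fun M => a * \det M) e; rewrite /= detZ det_mulmx.
move=> h.
have h2 : a ^+ n * (a * \det (B + u *m v)) = a ^+ n * (\det B * (a + (v *m w) 0 0)).
  rewrite mulrCA h mulrCA det_scalar_rank1; ring.
exact: (mulfI (expf_neq0 n a0)).
Qed.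

Lemma det_mx2 (T : comNzRingType) (A : 'M[T]_2) :
  \det A = A 0 0 * A 1 1 - A 0 1 * A 1 0.
Proof.
rewrite (expand_det_row _ 0) !big_ord_recl big_ord0 /cofactor !det_mx11 !mxE /=.
rewrite addr0 expr0 mul1r expr1 /=. 
have e1 : lift 0 0 = 1 :> 'I_2 by apply/val_inj.
have e2 : lift (1 : 'I_2) 0 = 0 :> 'I_2 by apply/val_inj.
rewrite ?e1 ?e2 ?e1.
ring.
Qed.

Section Main.
Variable R : fieldType.

Definition Kmat n (gam del : R) : 'M[R]_n :=
  \matrix_(i < n, j < n)
    if ((i : nat) == 0%N) && ((j : nat) == 1%N) then del
    else if ((i : nat) == 1%N) && ((j : nat) == 0%N) then del^-1
    else if ((i : nat) == 2%N) && ((j : nat) == 3%N) then gam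
    else if ((i : nat) == 3%N) && ((j : nat) == 2%N) then gam^-1
    else 1.

Definition b2 (p q : R) : 'M[{poly R}]_2 :=
  \matrix_(i, j) if i == j then - 'X else if (i : nat) == 0%N then p%:P else q%:P.

Definition w2 (p q R0 : R) : 'cV[{poly R}]_2 :=
  \col_i ((if (i : nat) == 0%N then - ('X + p%:P) else - ('X + q%:P)) * 'X * ('X ^+ 2 - R0%:P)).

Lemma b2w2 p q R0 : b2 p q *m w2 p q R0 = ('X * ('X ^+ 2 - (p * q)%:P) * ('X ^+ 2 - R0%:P)) *: const_mx 1.
Proof.
apply/matrixP => i j; rewrite !mxE !big_ord_recl big_ord0 !mxE /=.
case: i => [[|[|//]] ?] /=; rewrite ?mulr1; ring.
Qed.

Lemma det_b2 p q : \det (b2 p q) = 'X ^+ 2 - (p * q)%:P.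
Proof. rewrite det_mx2 !mxE /=; ring. Qed.


Variables (gam del : R) (m : nat).
Let p := del - 1.
Let q := del^-1 - 1.
Let r := gam - 1.
Let s := gam^-1 - 1.
Let P0 := p * q.
Let R0 := r * s.
Let a : {poly R} := 'X * ('X ^+ 2 - P0%:P) * ('X ^+ 2 - R0%:P).
Let B4 : 'M[{poly R}]_(2 + 2) := block_mx (b2 p q) 0 0 (b2 r s).
Let w4 : 'cV[{poly R}]_(2 + 2) := col_mx (w2 p q R0) (w2 r s P0).
Let B : 'M[{poly R}]_(2 + 2 + m) := block_mx B4 0 0 (- 'X)%:M.
Let c0 : {poly R} := - (('X ^+ 2 - P0%:P) * ('X ^+ 2 - R0%:P)).
Let w : 'cV[{poly R}]_(2 + 2 + m) := col_mx w4 (const_mx c0).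

Lemma Bw : B *m w = a *: const_mx 1.
Proof.
rewrite /B /w /B4 /w4 !mul_block_col !b2w2 !mul0mx !addr0 !add0r mul_scalar_mx.
apply/matrixP => i j; rewrite !mxE.
case: splitP => i1 _; rewrite !mxE; last by rewrite /a /c0; ring.
case: splitP => i2 _; rewrite !mxE /a /R0 /P0; ring.
Qed.

Lemma detB : \det B = ('X ^+ 2 - P0%:P) * ('X ^+ 2 - R0%:P) * (- 'X) ^+ m.
Proof. by rewrite /B /B4 !det_ublock !det_b2 det_scalar. Qed.

Lemma vw : ((const_mx 1 : 'rV[{poly R}]_(2 + 2 + m)) *m w) 0 0 =
  - (2%:R * 'X + (p + q)%:P) * 'X * ('X ^+ 2 - R0%:P)
  - (2%:R * 'X + (r + s)%:P) * 'X * ('X ^+ 2 - P0%:P) + m%:R * c0.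
Proof.
rewrite mxE big_split_ord /= /w /w4.
rewrite [X in _ + X = _](eq_bigr (fun=> c0)); last by move=> i _; rewrite col_mxEd !mxE mul1r.
rewrite sumr_const card_ord.
rewrite big_split_ord /=.
rewrite [X in X + _ + _ = _](eq_bigr (fun i => w2 p q R0 i 0)); last by move=> i _; rewrite !col_mxEu !mxE mul1r.
rewrite [X in _ + X + _ = _](eq_bigr (fun i => w2 r s P0 i 0)); last by move=> i _; rewrite col_mxEu col_mxEd !mxE mul1r.
rewrite !big_ord_recl !big_ord0 /= !mxE /=.
rewrite -[c0 *+ m]mulr_natl; ring.
Qed.


Lemma Nsplit : map_mx polyC (Kmat (2 + 2 + m) gam del) - 'X%:M =
  B + (const_mx 1 : 'cV_(2 + 2 + m)) *m (const_mx 1 : 'rV_(2 + 2 + m)).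
Proof.
apply/matrixP => i j; rewrite /B /B4 !mxE big_ord1 ?mxE.
rewrite -(inj_eq val_inj) /=.
case: (splitP i) => i1 Hi; rewrite ?mxE; case: (splitP j) => j1 Hj; rewrite ?mxE Hi Hj.
- case: (splitP i1) => i2 Hi2; rewrite ?mxE; case: (splitP j1) => j2 Hj2; rewrite ?mxE Hi2 Hj2;
  case: i2 {Hi2} => [[|[|//]] ?]; case: j2 {Hj2} => [[|[|//]] ?] /=; rewrite /p /q /r /s; ring.
- rewrite -?addnA ?add2n /= ?andbF.
  rewrite (_ : ((i1 : nat) == j1.+4)%N = false); last by apply/negbTE; rewrite neq_ltn (leq_trans (ltn_ord i1)).
  by rewrite mulr0n polyC1 subr0 add0r mulr1.
- rewrite -?addnA ?add2n /= ?andbF.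
  rewrite (_ : (i1.+4 == (j1 : nat))%N = false); last by apply/negbTE; rewrite neq_ltn (leq_trans (ltn_ord j1)) ?orbT.
  by rewrite mulr0n polyC1 subr0 add0r mulr1.
- rewrite -?addnA ?add2n /= ?mxE -(inj_eq val_inj) /=.
  rewrite !eqSS mulNrn polyC1 mulr1 addrC; reflexivity.
Qed.


Let G : {poly R} := 'X ^+ 5 - (4 + m)%:R * 'X ^+ 4 + (2 + m)%:R * (P0 + R0)%:P * 'X ^+ 2
  - (P0 * R0)%:P * 'X - m%:R * (P0 * R0)%:P.

Lemma keyK : gam != 0 -> del != 0 ->
  'X * \det (map_mx polyC (Kmat (2 + 2 + m) gam del) - 'X%:M) = (-1) ^+ m * 'X ^+ m * G.
Proof.
move=> g0 d0.
have Qnz : ('X ^+ 2 - P0%:P) * ('X ^+ 2 - R0%:P) != 0 :> {poly R}.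
  by rewrite mulf_neq0 // monic_neq0 // monicXnsubC.
have anz : a != 0 by rewrite /a -mulrA mulf_neq0 // polyX_eq0.
have h := @det_rank1 _ _ _ _ (const_mx 1) (const_mx 1) _ anz Bw.
rewrite -Nsplit detB vw in h.
have hpq : p + q = - P0 by rewrite /P0 /p /q; field.
have hrs : r + s = - R0 by rewrite /R0 /r /s; field.
rewrite hpq hrs in h.
apply: (mulfI Qnz); rewrite mulrA (_ : _ * 'X = a); last by rewrite /a; ring.
rewrite h [(- 'X) ^+ m]exprNn /c0 /G /a !natrD; ring.
Qed.

End Main.


Lemma step1 (R : fieldType) n (x : nat -> R) (gam del : R) :
  gam != 0 -> del != 0 ->
  x 0%N = 1 -> (forall i : 'I_n, x i != 0) ->
  charpoly_paper (Rmat n x gam del) = \det (map_mx polyC (Kmat R n gam del) - 'X%:M).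
Proof.
move=> g0 d0 x0 xnz.
pose D : 'M[{poly R}]_n := diag_mx (\row_i (x i)%:P).
pose Di : 'M[{poly R}]_n := diag_mx (\row_i ((x i)^-1)%:P).
have e : map_mx polyC (Rmat n x gam del) - 'X%:M =
         Di *m (map_mx polyC (Kmat R n gam del) - 'X%:M) *m D.
  apply/matrixP => i j; rewrite /D /Di mul_mx_diag mul_diag_mx !mxE.
  have hi := xnz i; have hj := xnz j.
  rewrite mulrBr mulrBl -!polyCM; congr (_ - _).
  - congr polyC.
    case: ifP => [/andP[/eqP Ei /eqP Ej]|H1]; first by rewrite Ei Ej x0 invr1 mul1r.
    case: ifP => [/andP[/eqP Ei /eqP Ej]|H2]. by move: hi hj; rewrite Ei Ej x0 => hi hj; field; rewrite ?d0 ?g0 ?hi ?hj.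
    case: ifP => [/andP[/eqP Ei /eqP Ej]|H3]; first by move: hi hj; rewrite Ei Ej => hi hj; field; rewrite ?d0 ?g0 ?hi ?hj.
    case: ifP => [/andP[/eqP Ei /eqP Ej]|H4]; first by move: hi hj; rewrite Ei Ej => hi hj; field; rewrite ?d0 ?g0 ?hi ?hj.
    by field; rewrite ?d0 ?g0 ?hi ?hj.
  - case: (eqVneq i j) => [<-|nij]; last by rewrite !mulr0n mulr0 mul0r.
    by rewrite !mulr1n mulrC mulrA -polyCM mulfV // polyC1 mul1r.
rewrite /charpoly_paper e !det_mulmx /D /Di !det_diag mulrC mulrA -big_split /=.
by rewrite big1 ?mul1r // => i _; rewrite !mxE -polyCM mulfV ?polyC1.
Qed.


Theorem theorem4 (R : realFieldType) (n : nat) (x : nat -> R) (gam del : R) :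
  (4 <= n)%N ->
  x 0%N = 1 ->
  (forall k : nat, (1 <= k <= n.-1)%N -> 0 < x k) ->
  0 < gam -> 0 < del -> gam != 1 -> del != 1 ->
  let c := (gam - 1) ^+ 2 * (del - 1) ^+ 2 / (gam * del) in
  let s := gam + del + gam^-1 + del^-1 - 4 in
  ((5 <= n)%N ->
     charpoly_paper (Rmat n x gam del) =
     (-1) ^+ n *: ('X ^+ (n - 5) *
       ('X ^+ 5 - n%:R *: 'X ^+ 4 - ((n - 2)%:R * s) *: 'X ^+ 2
        - c *: 'X - ((n - 4)%:R * c)%:P)))
  /\
  (n = 4%N ->
     charpoly_paper (Rmat n x gam del) =
     'X ^+ 4 - 4%:R *: 'X ^+ 3 - (2%:R * s) *: 'X - c%:P).
Proof.
move=> n4 x0 xpos gpos dpos g1 d1 c s.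
have g0 : gam != 0 by rewrite lt0r_neq0.
have d0 : del != 0 by rewrite lt0r_neq0.
have xnz : forall i : 'I_n, x i != 0.
  move=> i; case: (eqVneq (i : nat) 0%N) => [->|i0]; first by rewrite x0 oner_neq0.
  apply: lt0r_neq0; apply: xpos; have := ltn_ord i; lia.
rewrite step1 //.
have [m hm] : exists m, n = (2 + 2 + m)%N by exists (n - 4)%N; lia.
subst n.
have hK := @keyK R gam del m g0 d0.
set P0 := (del - 1) * (del^-1 - 1) in hK.
set R0 := (gam - 1) * (gam^-1 - 1) in hK.
have hs : s = - (P0 + R0) by rewrite /s /P0 /R0; field; rewrite ?g0 ?d0.
have hc : c = P0 * R0 by rewrite /c /P0 /R0; field; rewrite ?g0 ?d0.
have Xnz : 'X != 0 :> {poly R} by rewrite polyX_eq0.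
split.
- clear n4 xpos xnz; case: m hK => [//|m] hK _.
  apply: (mulfI Xnz); rewrite hK.
  rewrite (_ : (2 + 2 + m.+1 - 5)%N = m); last by lia.
  rewrite (_ : (2 + 2 + m.+1 - 2)%N = (2 + m.+1)%N); last by lia.
  rewrite (_ : (2 + 2 + m.+1 - 4)%N = m.+1); last by lia.
  rewrite -!mul_polyC rmorph_sign hs hc !exprD !exprS !natrD ![m.+1%:R]mulrS; ring.
- move=> m0; have m00 : m = 0%N by lia.
  subst m.
  apply: (mulfI Xnz); rewrite hK.
  rewrite -!mul_polyC hs hc /= !expr0 !mul1r; ring.
Qed.
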